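(* Let $k>d$, let $\mathbf X\in\mathbb R^{k\times d}$ have full column rank $d$ and rows $\mathbf x_i^\top$, and let $\mathbf y\in\mathbb R^k$. Then $\mathbf X^+\mathbf y=\sum_{i=1}^k\dfrac{\det(\mathbf X_{-i}^\top\mathbf X_{-i})}{(k-d)\det(\mathbf X^\top\mathbf X)}\,\mathbf X_{-i}^+\mathbf y_{-i}$, where $\mathbf X_{-i}$ is $\mathbf X$ with its $i$-th row removed, $\mathbf y_{-i}$ is $\mathbf y$ with its $i$-th entry removed, and $^+$ denotes the Moore–Penrose pseudoinverse. *)

(* Defs.v *)
From HB Require Import structures.
From mathcomp Require Import all_boot all_order all_algebra.
Set Implicit Arguments. Unset Strict Implicit. Unset Printing Implicit Defensive.
Import Order.TTheory GRing.Theory Num.Theory.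
Local Open Scope ring_scope.

(* B is the Moore--Penrose pseudoinverse of A (the four Penrose conditions;
   over a real field the conjugate transpose is the transpose). *)
Definition is_pinv (R : realFieldType) (m n : nat)
  (A : 'M[R]_(m, n)) (B : 'M[R]_(n, m)) : Prop :=
  [/\ A *m B *m A = A, B *m A *m B = B,
      (A *m B)^T = A *m B & (B *m A)^T = B *m A].

(* Main.v *)
Require Import Defs.
From HB Require Import structures.
From mathcomp Require Import all_boot all_order all_algebra.
From mathcomp Require Import ring.
Import Order.TTheory GRing.Theory Num.Theory.
Local Open Scope ring_scope.
Set Implicit Arguments. Unset Strict Implicit.


Lemma tmul_sum (R : fieldType) m p q (M : 'M[R]_(m,p)) (N : 'M[R]_(m,q)) :
  M^T *m N = \sum_(j < m) (row j M)^T *m row j N.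
Proof.
apply/matrixP => a b; rewrite !mxE summxE; apply: eq_bigr => j _.
by rewrite !mxE big_ord1 !mxE.
Qed.

Lemma tmul_row' (R : fieldType) m p q (i : 'I_m.+1) (M : 'M[R]_(m.+1,p)) (N : 'M[R]_(m.+1,q)) :
  (row' i M)^T *m row' i N = M^T *m N - (row i M)^T *m row i N.
Proof.
rewrite (tmul_sum (row' i M)) (tmul_sum M) (bigD1_ord i) //= addrC addrK.
by apply: eq_bigr => j _; congr (_^T *m _); apply/rowP => c; rewrite !mxE.
Qed.

Lemma det_rank1 (R : fieldType) d (u v : 'cV[R]_d) :
  \det (1%:M - u *m v^T) = 1 - (v^T *m u) 0 0.
Proof.
have E1 : block_mx 1%:M u v^T 1%:M =
  block_mx 1%:M 0 v^T 1%:M *m block_mx 1%:M u 0 (1%:M - v^T *m u) :> 'M[R]_(d + 1).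
  by rewrite mulmx_block ?mul1mx ?mulmx1 ?mul0mx ?mulmx0 ?addr0 ?add0r ?(addrC (v^T *m u)) ?subrK.
have E2 : block_mx 1%:M u v^T 1%:M =
  block_mx 1%:M u 0 1%:M *m block_mx (1%:M - u *m v^T) 0 v^T 1%:M :> 'M[R]_(d + 1).
  by rewrite mulmx_block ?mul1mx ?mulmx1 ?mul0mx ?mulmx0 ?addr0 ?add0r ?subrK.
have := congr1 determinant (etrans (esym E1) E2).
rewrite !det_mulmx !det_ublock !det_lblock !det1 ?mul1r ?mulr1 => <-.
by rewrite [X in \det X]mx11_scalar !mxE det_scalar1 eqxx.
Qed.

Lemma quad (R : fieldType) (d : nat) (P : 'M[R]_d) (r : 'rV_d) p (M : 'M[R]_(1,p)) :
  P *m r^T *m r *m P *m (r^T *m M) = (r *m P *m r^T) 0 0 *: (P *m r^T *m M).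
Proof.
rewrite !mulmxA -(mulmxA (P *m r^T) r P) -(mulmxA (P *m r^T) (r *m P) r^T).
by rewrite {1}[r *m P *m r^T]mx11_scalar mul_mx_scalar -scalemxAl.
Qed.

Lemma pieceC (R : fieldType) (d : nat) (P A : 'M[R]_d) (r : 'rV_d) : P *m A = 1%:M ->
  let h := (r *m P *m r^T) 0 0 in
  ((1 - h) *: P + P *m r^T *m r *m P) *m (A - r^T *m r) = (1 - h) *: 1%:M.
Proof.
move=> hPA h; rewrite mulmxDl -scalemxAl !mulmxBr hPA quad -/h.
rewrite -(mulmxA _ P A) hPA mulmx1 !mulmxA.
set W := P *m r^T *m r.
by rewrite scalerBr !scalerBl !scale1r subrK.
Qed.

Lemma pieceB (R : fieldType) (d : nat) (P A : 'M[R]_d) (r : 'rV_d) (b : 'cV_d) (s : 'M[R]_1) : P *m A = 1%:M ->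
  let h := (r *m P *m r^T) 0 0 in
  ((1 - h) *: P + P *m r^T *m r *m P) *m (b - r^T *m s) =
  (1 - h) *: (P *m b) - P *m r^T *m s + P *m r^T *m r *m P *m b.
Proof.
move=> hPA h; rewrite mulmxDl -scalemxAl !mulmxBr quad -/h mulmxA.
rewrite scalerBr scalerBl scale1r.
set a := P *m b; set c := P *m r^T *m s; set e := P *m r^T *m r *m P *m b.
rewrite scalerBl scale1r opprB -!addrA; congr (_ + (_ + _)).
by rewrite addrC !addrA subrK.
Qed.

Unset Implicit Arguments. Set Strict Implicit.
Theorem lemma2 (R : realFieldType) (n d : nat) (hkd : (d < n.+1)%N)
  (X : 'M[R]_(n.+1, d)) (hrank : \rank X = d) (y : 'cV[R]_(n.+1))
  (Xp : 'M[R]_(d, n.+1)) (hXp : is_pinv X Xp)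
  (Xps : forall i : 'I_n.+1, 'M[R]_(d, n))
  (hXps : forall i : 'I_n.+1, is_pinv (row' i X) (Xps i)) :
  Xp *m y =
  \sum_(i < n.+1)
     (\det ((row' i X)^T *m row' i X)
        / ((n.+1 - d)%:R * \det (X^T *m X))) *: (Xps i *m row' i y).
Proof.
have [h1 h2 h3 h4] := hXp.
set A := X^T *m X.
set P := Xp *m Xp^T.
have hXpP : Xp = P *m X^T by rewrite /P -mulmxA -trmx_mul h3 mulmxA h2.
have hE : Xp *m X = 1%:M.
  have hu : Xp *m X \in unitmx.
    rewrite -row_free_unit /row_free eqn_leq rank_leq_row /=.
    apply: leq_trans (mxrankM_maxr X (Xp *m X)); rewrite mulmxA h1 hrank.
    by [].
  have EE : (Xp *m X) *m (Xp *m X) = Xp *m X by rewrite mulmxA h2.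
  by have := congr1 (mulmx (invmx (Xp *m X))) EE; rewrite mulKmx // mulVmx.
have hPA : P *m A = 1%:M.
  by rewrite /P /A mulmxA -(mulmxA Xp) -trmx_mul h3 !mulmxA h2 hE.
have hdA : \det A != 0.
  apply/eqP => h0; move: (congr1 determinant hPA).
  by rewrite det_mulmx h0 mulr0 det1 => /eqP; rewrite eq_sym oner_eq0.
set c : R := (n.+1 - d)%:R.
have hc : c != 0 by rewrite /c pnatr_eq0 -lt0n subn_gt0.
set b := X^T *m y.
pose r i := row i X.
pose h i := (r i *m P *m (r i)^T) 0 0.
have step : forall i : 'I_n.+1,
  (\det ((row' i X)^T *m row' i X) / (c * \det A)) *: (Xps i *m row' i y) =
  c^-1 *: ((1 - h i) *: (P *m b) - P *m (r i)^T *m row i y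
           + P *m (r i)^T *m r i *m P *m b).
  move=> i.
  have hAi : (row' i X)^T *m row' i X = A - (r i)^T *m r i by rewrite tmul_row'.
  have hbi : (row' i X)^T *m row' i y = b - (r i)^T *m row i y by rewrite tmul_row'.
  have hdet : \det ((row' i X)^T *m row' i X) = \det A * (1 - h i).
    rewrite hAi.
    have -> : A - (r i)^T *m r i = (1%:M - (r i)^T *m (P^T *m (r i)^T)^T) *m A.
      by rewrite mulmxBl mul1mx trmx_mul trmxK trmxK -mulmxA -(mulmxA (r i)) hPA mulmx1.
    by rewrite det_mulmx det_rank1 trmx_mul !trmxK mulrC.
  have [g1 g2 g3 g4] := hXps i.
  have hXt : (row' i X)^T = (row' i X)^T *m row' i X *m Xps i.
    by rewrite -mulmxA -g3 -trmx_mul g1.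
  have hb' : b - (r i)^T *m row i y = (A - (r i)^T *m r i) *m (Xps i *m row' i y).
    by rewrite -hbi -hAi mulmxA -hXt.
  rewrite -(@pieceB _ _ P A (r i) b (row i y) hPA) hb' (mulmxA _ (A - _)).
  rewrite (@pieceC _ _ P A (r i) hPA) -/(h i) -scalemxAl mul1mx scalerA hdet.
  by congr (_ *: _); field; apply/andP; split.
have S1 : \sum_(i < n.+1) P *m (r i)^T *m row i y = P *m b.
  by rewrite /b tmul_sum mulmx_sumr; apply: eq_bigr => i _; rewrite mulmxA.
have S2 : \sum_(i < n.+1) P *m (r i)^T *m r i *m P *m b = P *m b.
  transitivity (\sum_(i < n.+1) P *m ((r i)^T *m r i) *m (P *m b)).
    by apply: eq_bigr => i _; rewrite !mulmxA.
  by rewrite -mulmx_suml -mulmx_sumr -tmul_sum -/A mulmxA hPA mul1mx.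
have S3 : \sum_(i < n.+1) h i = d%:R.
  transitivity (\tr (\sum_(i < n.+1) (r i)^T *m r i *m P)).
    rewrite raddf_sum; apply: eq_bigr => i _.
    by rewrite /h /= -(mulmxA (r i)^T) mxtrace_mulC /mxtrace big_ord1.
  by rewrite -mulmx_suml -tmul_sum -/A mxtrace_mulC hPA mxtrace1.
have S4 : \sum_(i < n.+1) (1 - h i) = c.
  by rewrite sumrB S3 sumr_const card_ord /c natrB // ltnW.
rewrite (eq_bigr _ (fun i _ => step i)) -scaler_sumr big_split /= sumrB.
rewrite -scaler_suml S4 S1 S2 subrK scalerA mulVf // scale1r.
by rewrite hXpP -mulmxA.
Qed.
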